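(* For a free $E$-linear code $C$ of length $2n$, $\mathrm{rank}(SHull(C))=\dim_{\mathbb{F}_2}(SHull(C_{Res}))$.
   Context: $E=\langle \kappa,\tau \mid 2\kappa=2\tau=0,\ \kappa^2=\kappa,\ \tau^2=\tau,\ \kappa\tau=\kappa,\ \tau\kappa=\tau\rangle$ is the non-unital ring $\{0,\kappa,\tau,\zeta\}$, $\zeta=\kappa+\tau$, with $e\kappa=e\tau=e$, $e\zeta=0$ for all $e\in E$. Every $e\in E$ is uniquely $u\kappa+v\zeta$ ($u,v\in\mathbb{F}_2$); $\pi(u\kappa+v\zeta)=u$, componentwise. An $E$-linear code of length $2n$ is a left $E$-submodule $C\subseteq E^{2n}$; $C_{Res}=\pi(C)$, $C_{Tor}=\{v\in\mathbb{F}_2^{2n}:\zeta v\in C\}$ (componentwise, $0\cdot\zeta=0,1\cdot\zeta=\zeta$); $C$ is free if $C_{Res}=C_{Tor}$. A finite set $X\subseteq E^{2n}$ generates $C$ if $C$ equals the union of the $E$-span $\{\sum e_jx_j:e_j\in E\}$ and the $\mathbb{F}_2$-span $\{\sum u_jx_j:u_j\in\mathbb{F}_2\}$ of $X$; the rank of a free code is the cardinality of a minimal generating set. Symplectic inner product (over $E$ or $\mathbb{F}_2$): $\langle (u|v),(u'|v')\rangle_s=\sum_i u_iv'_i+\sum_i v_iu'_i$. For binary $B$: $B^{\perp_S}=\{z:\langle z,w\rangle_s=0\ \forall w\in B\}$, $SHull(B)=B\cap B^{\perp_S}$. For $E$-linear $C$: $C^{\perp_S}=\{z\in E^{2n}:\langle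 z,w\rangle_s=\langle w,z\rangle_s=0\ \forall w\in C\}$, $SHull(C)=C\cap C^{\perp_S}$ (free whenever $C$ is free). *)

(* Defs.v *)
From HB Require Import structures.
From mathcomp Require Import all_boot all_order all_algebra.
Set Implicit Arguments. Unset Strict Implicit. Unset Printing Implicit Defensive.
Import Order.TTheory GRing.Theory Num.Theory.
Local Open Scope ring_scope.

(* The non-unital ring E = {0, kappa, tau, zeta}, zeta = kappa + tau. *)
Inductive E := E0 | Ek | Et | Ez.

Definition E_enc (e : E) : bool * bool :=
  match e with E0 => (false, false) | Ek => (true, false)
             | Et => (false, true)  | Ez => (true, true) end.
Definition E_dec (p : bool * bool) : E :=
  match p with (false, false) => E0 | (true, false) => Ek
             | (false, true) => Et | (true, true) => Ez end.
Lemma E_encK : cancel E_enc E_dec. Proof. by case. Qed.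

HB.instance Definition _ := Finite.copy E (can_type E_encK).

Definition Eadd (a b : E) : E :=
  match a, b with
  | E0, x | x, E0 => x
  | Ek, Ek | Et, Et | Ez, Ez => E0
  | Ek, Et | Et, Ek => Ez
  | Ek, Ez | Ez, Ek => Et
  | Et, Ez | Ez, Et => Ek
  end.
Definition Eopp (a : E) : E := a.

Lemma EaddA : associative Eadd. Proof. by do 3!case. Qed.
Lemma EaddC : commutative Eadd. Proof. by do 2!case. Qed.
Lemma Eadd0 : left_id E0 Eadd. Proof. by case. Qed.
Lemma EaddN : left_inverse E0 Eopp Eadd. Proof. by case. Qed.

HB.instance Definition _ := GRing.isZmodule.Build E EaddA EaddC Eadd0 EaddN.

Definition Emul (a b : E) : E :=
  match b with Ek | Et => a | _ => E0 end.

(* pi(u kappa + v zeta) = u, as an element of F_2. *)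
Definition piE (e : E) : 'F_2 :=
  match e with Ek | Et => 1 | _ => 0 end.

(* Vectors of length 2n: indices 'I_(n+n); first n coordinates = u, last n = v. *)
Notation Evec n := {ffun 'I_(n + n) -> E}.
Notation Fvec n := 'rV['F_2]_(n + n).

Definition Escale n (e : E) (x : Evec n) : Evec n := [ffun i => Emul e (x i)].

Definition Elinear n (C : {set Evec n}) : Prop :=
  [/\ (0 : Evec n) \in C,
      (forall x y, x \in C -> y \in C -> x + y \in C) &
      (forall e x, x \in C -> Escale e x \in C)].

Definition Cres n (C : {set Evec n}) : {set Fvec n} :=
  [set (\row_i piE (x i) : Fvec n) | x : Evec n in C].

Definition zeta_vec n (v : Fvec n) : Evec n :=
  [ffun i => if v 0 i == 0 then E0 else Ez].

Definition Ctor n (C : {set Evec n}) : {set Fvec n} :=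
  [set v : Fvec n | zeta_vec v \in C].

Definition Efree n (C : {set Evec n}) : Prop := Cres C = Ctor C.

(* Spans of a finite set X: E-span and F_2-span (u_j in F_2 acting by 0x=0, 1x=x,
   encoded by a boolean selecting the x_j with u_j = 1). *)
Definition inEspan n (X : {set Evec n}) (z : Evec n) : Prop :=
  exists f : Evec n -> E, z = \sum_(x in X) Escale (f x) x.
Definition inF2span n (X : {set Evec n}) (z : Evec n) : Prop :=
  exists f : Evec n -> bool, z = \sum_(x in X | f x) x.

Definition generates n (X C : {set Evec n}) : Prop :=
  forall z, z \in C <-> (inEspan X z \/ inF2span X z).

Definition is_rank n (C : {set Evec n}) (r : nat) : Prop :=
  (exists X, generates X C /\ #|X| = r) /\
  (forall X, generates X C -> (r <= #|X|)%N).

Definition sympE n (x y : Evec n) : E :=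
  \sum_(i < n) Emul (x (lshift n i)) (y (rshift n i)) +
  \sum_(i < n) Emul (x (rshift n i)) (y (lshift n i)).

Definition sympF n (x y : Fvec n) : 'F_2 :=
  \sum_(i < n) x 0 (lshift n i) * y 0 (rshift n i) +
  \sum_(i < n) x 0 (rshift n i) * y 0 (lshift n i).

Definition dualE n (C : {set Evec n}) : {set Evec n} :=
  [set z | [forall w in C, (sympE z w == 0) && (sympE w z == 0)]].
Definition SHullE n (C : {set Evec n}) : {set Evec n} := C :&: dualE C.

Definition dualF n (B : {set Fvec n}) : {set Fvec n} :=
  [set z | [forall w in B, sympF z w == 0]].
Definition SHullF n (B : {set Fvec n}) : {set Fvec n} := B :&: dualF B.

Definition dimF2 n (B : {set Fvec n}) : nat := \dim <<enum B>>%VS.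

(* Main.v *)
Require Import Defs.
From mathcomp Require Import all_boot all_order all_algebra.
Set Implicit Arguments. Unset Strict Implicit. Unset Printing Implicit Defensive.
Import Order.TTheory GRing.Theory Num.Theory.
Local Open Scope ring_scope.

Lemma F2_cases (c : 'F_2) : c = 0 \/ c = 1.
Proof. case: c => [[|[|m]] Hm]; [left|right|by []]; exact/val_inj. Qed.

Lemma F2_add11 : (1 + 1 : 'F_2) = 0.
Proof. exact: (@val_inj _ _ _ (1+1 : 'F_2) 0 erefl). Qed.

Lemma F2_addxx (c : 'F_2) : c + c = 0.
Proof. by case: (F2_cases c) => ->; rewrite ?addr0 ?F2_add11. Qed.

Definition ua (e : E) : 'F_2 := Defs.piE e.
Definition ub (e : E) : 'F_2 := match e with Ez | Et => 1 | _ => 0 end.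

Lemma E_ext e1 e2 : ua e1 = ua e2 -> ub e1 = ub e2 -> e1 = e2.
Proof.
by case: e1; case: e2 => //= /eqP; rewrite ?oner_eq0 // eq_sym oner_eq0.
Qed.

Lemma uaD a b : ua (a + b) = ua a + ua b.
Proof. by case: a; case: b => /=; rewrite ?F2_add11 ?addr0 ?add0r. Qed.
Lemma ubD a b : ub (a + b) = ub a + ub b.
Proof. by case: a; case: b => /=; rewrite ?F2_add11 ?addr0 ?add0r. Qed.
Lemma ua0 : ua 0 = 0. Proof. by []. Qed.
Lemma ub0 : ub 0 = 0. Proof. by []. Qed.
Lemma uaM a b : ua (Emul a b) = ua a * ua b.
Proof. by case: a; case: b => /=; rewrite ?mulr0 ?mul0r ?mulr1. Qed.
Lemma ubM a b : ub (Emul a b) = ub a * ua b.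
Proof. by case: a; case: b => /=; rewrite ?mulr0 ?mul0r ?mulr1. Qed.

Section Vecs.
Variable n : nat.

Definition pa (x : Evec n) : Fvec n := \row_i ua (x i).
Definition pb (x : Evec n) : Fvec n := \row_i ub (x i).
Definition cmb (u v : 'F_2) : E :=
  if u == 0 then (if v == 0 then E0 else Ez) else (if v == 0 then Ek else Et).
Definition mk (a b : Fvec n) : Evec n := [ffun i => cmb (a 0 i) (b 0 i)].

Lemma ua_cmb u v : ua (cmb u v) = u.
Proof. by case: (F2_cases u) => ->; case: (F2_cases v) => ->. Qed.
Lemma ub_cmb u v : ub (cmb u v) = v.
Proof. by case: (F2_cases u) => ->; case: (F2_cases v) => ->. Qed.

Lemma Evec_ext (x y : Evec n) : pa x = pa y -> pb x = pb y -> x = y.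
Proof.
move=> /rowP ha /rowP hb; apply/ffunP => i; apply: E_ext.
  by have := ha i; rewrite !mxE.
by have := hb i; rewrite !mxE.
Qed.

Lemma paK a b : pa (mk a b) = a.
Proof. by apply/rowP => i; rewrite !mxE ffunE ua_cmb. Qed.
Lemma pbK a b : pb (mk a b) = b.
Proof. by apply/rowP => i; rewrite !mxE ffunE ub_cmb. Qed.

Lemma paD x y : pa (x + y) = pa x + pa y.
Proof. by apply/rowP => i; rewrite !mxE ffunE uaD. Qed.
Lemma pbD x y : pb (x + y) = pb x + pb y.
Proof. by apply/rowP => i; rewrite !mxE ffunE ubD. Qed.
Lemma pa0 : pa 0 = 0.
Proof. by apply/rowP => i; rewrite !mxE ffunE. Qed.
Lemma pb0 : pb 0 = 0.
Proof. by apply/rowP => i; rewrite !mxE ffunE. Qed.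

Lemma pa_sum I (r : seq I) (P : pred I) (F : I -> Evec n) :
  pa (\sum_(i <- r | P i) F i) = \sum_(i <- r | P i) pa (F i).
Proof. exact: (big_morph pa paD pa0). Qed.
Lemma pb_sum I (r : seq I) (P : pred I) (F : I -> Evec n) :
  pb (\sum_(i <- r | P i) F i) = \sum_(i <- r | P i) pb (F i).
Proof. exact: (big_morph pb pbD pb0). Qed.

Lemma paS e x : pa (Escale e x) = ua e *: pa x.
Proof. by apply/rowP => i; rewrite !mxE ffunE uaM. Qed.
Lemma pbS e x : pb (Escale e x) = ub e *: pa x.
Proof. by apply/rowP => i; rewrite !mxE ffunE ubM. Qed.

Lemma paZ v : pa (zeta_vec v) = 0.
Proof. by apply/rowP => i; rewrite !mxE ffunE; case: ifP. Qed.
Lemma pbZ v : pb (zeta_vec v) = v.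
Proof.
apply/rowP => i; rewrite !mxE ffunE.
by case: (F2_cases (v 0 i)) => ->.
Qed.

Lemma Fvec_addxx (v : Fvec n) : v + v = 0.
Proof. by apply/rowP => i; rewrite !mxE F2_addxx. Qed.

Lemma ua_sum I (r : seq I) (P : pred I) (F : I -> E) :
  ua (\sum_(i <- r | P i) F i) = \sum_(i <- r | P i) ua (F i).
Proof. exact: (big_morph ua uaD ua0). Qed.
Lemma ub_sum I (r : seq I) (P : pred I) (F : I -> E) :
  ub (\sum_(i <- r | P i) F i) = \sum_(i <- r | P i) ub (F i).
Proof. exact: (big_morph ub ubD ub0). Qed.

Lemma ua_symp x y : ua (sympE x y) = sympF (pa x) (pa y).
Proof.
rewrite /sympE /sympF uaD !ua_sum; congr (_ + _); apply: eq_bigr => i _;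
by rewrite uaM !mxE.
Qed.
Lemma ub_symp x y : ub (sympE x y) = sympF (pb x) (pa y).
Proof.
rewrite /sympE /sympF ubD !ub_sum; congr (_ + _); apply: eq_bigr => i _;
by rewrite ubM !mxE.
Qed.

Lemma E_eq0 e : (e == 0) = (ua e == 0) && (ub e == 0).
Proof. by case: e; rewrite /= ?oner_eq0 ?eqxx. Qed.

Lemma sympE_eq0 x y :
  (sympE x y == 0) = (sympF (pa x) (pa y) == 0) && (sympF (pb x) (pa y) == 0).
Proof. by rewrite E_eq0 ua_symp ub_symp. Qed.

Lemma sympFC (a b : Fvec n) : sympF a b = sympF b a.
Proof.
rewrite /sympF addrC; congr (_ + _); apply: eq_bigr => i _; exact: mulrC.
Qed.

Lemma sympFDl (a b w : Fvec n) : sympF (a + b) w = sympF a w + sympF b w.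
Proof.
rewrite /sympF [RHS]addrACA; congr (_ + _); rewrite -big_split;
by apply: eq_bigr => i _; rewrite !mxE mulrDl.
Qed.
Lemma sympF0l (w : Fvec n) : sympF 0 w = 0.
Proof.
rewrite /sympF !big1 ?addr0 // => i _; by rewrite !mxE mul0r.
Qed.

End Vecs.

Section Code.
Variables (n : nat) (C : {set Evec n}).
Hypotheses (hlin : Elinear C) (hfree : Efree C).

Local Notation B := (Cres C).

Lemma inB (x : Evec n) : x \in C -> pa x \in B.
Proof. by move=> xC; apply/imsetP; exists x. Qed.

Lemma inC z : (z \in C) <-> (pa z \in B /\ pb z \in B).
Proof.
case: hlin => C0 CD CS; split.
  move=> zC; split; first exact: inB.
  rewrite hfree inE.
  have -> : zeta_vec (pb z) = z + Escale Ek z.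
    apply: Evec_ext; rewrite ?paD ?pbD ?paS ?pbS ?paZ ?pbZ /= ?scale1r ?scale0r.
      by rewrite Fvec_addxx.
    by rewrite addr0.
  exact: CD (CS _ _ zC).
case=> /imsetP[x xC hx] zb.
move: zb; rewrite hfree inE => zb.
have -> : z = Escale Ek x + zeta_vec (pb z).
  apply: Evec_ext; rewrite ?paD ?pbD ?paS ?pbS ?paZ ?pbZ /= ?scale1r ?scale0r.
    by rewrite addr0 hx.
  by rewrite add0r.
exact: CD (CS _ _ xC) zb.
Qed.

Lemma B0 : (0 : Fvec n) \in B.
Proof. by case: hlin => C0 _ _; rewrite -pa0; exact: inB. Qed.

Lemma BD a b : a \in B -> b \in B -> a + b \in B.
Proof.
case: hlin => _ CD _.
move=> /imsetP[x xC ->] /imsetP[y yC ->]; rewrite -[_ + _]paD; exact/inB/CD.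
Qed.

Lemma mkB a : a \in B -> mk a 0 \in C.
Proof. by move=> aB; apply/inC; rewrite paK pbK; split=> //; exact: B0. Qed.

Lemma inDual z :
  (z \in dualE C) <-> (pa z \in dualF B /\ pb z \in dualF B).
Proof.
rewrite /dualE /dualF !inE; split.
  move=> /forall_inP h; split; apply/forall_inP => w wB;
  have /andP[] := h _ (mkB wB); rewrite sympE_eq0 paK => /andP[h1 h2] _ //.
move=> [/forall_inP ha /forall_inP hb]; apply/forall_inP => w /inC[waB wbB].
rewrite !sympE_eq0 ha // hb // sympFC ha // sympFC ha //.
Qed.

Lemma inS z :
  (z \in SHullE C) <-> (pa z \in SHullF B /\ pb z \in SHullF B).
Proof.
rewrite /SHullE /SHullF !in_setI; split.
  by move=> /andP[/inC[h1 h2] /inDual[h3 h4]]; rewrite h1 h2 h3 h4.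
move=> [/andP[h1 h3] /andP[h2 h4]]; apply/andP; split.
  exact/inC. exact/inDual.
Qed.

Local Notation H := (SHullF B).

Lemma H0 : (0 : Fvec n) \in H.
Proof.
rewrite !inE B0 /=; apply/forall_inP => w _; by rewrite sympF0l.
Qed.

Lemma HD a b : a \in H -> b \in H -> a + b \in H.
Proof.
rewrite !inE => /andP[aB /forall_inP ha] /andP[bB /forall_inP hb].
rewrite BD //=; apply/forall_inP => w wB.
by rewrite sympFDl (eqP (ha _ wB)) (eqP (hb _ wB)) addr0.
Qed.

Lemma HZ c a : a \in H -> c *: a \in H.
Proof. by case: (F2_cases c) => -> aH; rewrite ?scale0r ?scale1r // H0. Qed.

Local Notation U := (<<enum H>>%VS).

Lemma inU a : (a \in U) = (a \in H).
Proof.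
apply/idP/idP; last by move=> aH; apply: memv_span; rewrite mem_enum.
move=> aU; rewrite (coord_span (X := in_tuple (enum H)) aU).
apply: (big_ind (fun v => v \in H)) => //; [exact: H0 | exact: HD |].
move=> i _; apply: HZ.
have : (in_tuple (enum H))`_i \in enum H by apply: mem_nth; exact: ltn_ord.
by rewrite mem_enum.
Qed.

Lemma inSU z : (z \in SHullE C) <-> (pa z \in U /\ pb z \in U).
Proof. by rewrite !inU; exact: inS. Qed.

End Code.

Section Spans.
Variables (n : nat) (X : {set Evec n}).

Lemma Espan_in (W : {vspace Fvec n}) z :
  (forall x, x \in X -> pa x \in W) -> inEspan X z -> pa z \in W /\ pb z \in W.
Proof.
move=> hX [f ->]; rewrite pa_sum pb_sum; split; apply: memv_suml => x xX.
  by rewrite paS; apply: memvZ; exact: hX.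
by rewrite pbS; apply: memvZ; exact: hX.
Qed.

Lemma F2span_pa (W : {vspace Fvec n}) z :
  (forall x, x \in X -> pa x \in W) -> inF2span X z -> pa z \in W.
Proof.
move=> hX [f ->]; rewrite pa_sum; apply: memv_suml => x /andP[xX _]; exact: hX.
Qed.
Lemma F2span_pb (W : {vspace Fvec n}) z :
  (forall x, x \in X -> pb x \in W) -> inF2span X z -> pb z \in W.
Proof.
move=> hX [f ->]; rewrite pb_sum; apply: memv_suml => x /andP[xX _]; exact: hX.
Qed.

Lemma EscaleD e1 e2 (x : Evec n) : Escale (e1 + e2) x = Escale e1 x + Escale e2 x.
Proof.
apply: Evec_ext; by rewrite ?paD ?pbD ?paS ?pbS ?uaD ?ubD scalerDl.
Qed.
Lemma Escale0 (x : Evec n) : Escale 0 x = 0.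
Proof. apply: Evec_ext; by rewrite ?pa0 ?pb0 ?paS ?pbS scale0r. Qed.

Lemma Espan0 : inEspan X 0.
Proof. by exists (fun _ => 0); rewrite big1 // => x _; rewrite Escale0. Qed.

Lemma EspanD a b : inEspan X a -> inEspan X b -> inEspan X (a + b).
Proof.
move=> [f ->] [g ->]; exists (fun x => f x + g x); rewrite -big_split /=.
by apply: eq_bigr => x _; rewrite EscaleD.
Qed.

Lemma Espan_gen e x : x \in X -> inEspan X (Escale e x).
Proof.
move=> xX; exists (fun y => if y == x then e else 0).
rewrite (bigD1 x) //= eqxx big1 ?addr0 // => y /andP[_ /negbTE ->].
by rewrite Escale0.
Qed.

End Spans.

Theorem mainTheorem17 (n : nat) (C : {set Evec n}) :
  Elinear C -> Efree C -> is_rank (SHullE C) (dimF2 (SHullF (Cres C))).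
Proof.
move=> hlin hfree; rewrite /dimF2.
set H := SHullF (Cres C); set U := (<<enum H>>%VS).
have hS := inSU hlin hfree; rewrite -/H -/U in hS.
split.
  pose X := (fun h => mk h 0) @: [set h | h \in (vbasis U : seq _)].
  have hXa : forall x, x \in X -> pa x \in U.
    by move=> x /imsetP[h]; rewrite inE => /vbasis_mem hU ->; rewrite paK.
  have hXb : forall x, x \in X -> pb x \in U.
    by move=> x /imsetP[h _ ->]; rewrite pbK mem0v.
  exists X; split.
    move=> z; split.
      move=> /hS[za zb]; left.
      have -> : z = \sum_(i < \dim U) Escale (cmb (coord (vbasis U) i (pa z))
                     (coord (vbasis U) i (pb z))) (mk (vbasis U)`_i 0).
        apply: Evec_ext; rewrite ?pa_sum ?pb_sum.
          under eq_bigr => i _ do rewrite paS ua_cmb paK.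
          exact: coord_vbasis.
        under eq_bigr => i _ do rewrite pbS ub_cmb paK.
        exact: coord_vbasis.
      apply: (big_ind (inEspan X)); [exact: Espan0 | exact: EspanD |].
      move=> i _; apply: Espan_gen; apply/imsetP; exists (vbasis U)`_i => //.
      by rewrite inE; apply: mem_nth; rewrite size_tuple.
    case=> hz; apply/hS.
      exact: Espan_in hXa hz.
    by split; [exact: F2span_pa hXa hz | exact: F2span_pb hXb hz].
  rewrite card_imset; last by move=> a b /(congr1 (@pa n)); rewrite !paK.
  rewrite cardsE.
  have /card_uniqP -> := free_uniq (basis_free (vbasisP U)).
  by rewrite size_tuple.
move=> X genX.
set V := (<<[seq pa x | x <- enum X]>>%VS).
have hXV : forall x, x \in X -> pa x \in V.
  by move=> x xX; apply: memv_span; apply: map_f; rewrite mem_enum.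
have sub : (U <= V)%VS.
  apply/subvP => h hU.
  have : mk h 0 \in SHullE C by apply/hS; rewrite paK pbK mem0v.
  move/genX => [] hz; rewrite -(paK h 0).
    by case: (Espan_in hXV hz).
  exact: F2span_pa hXV hz.
apply: leq_trans (dimvS sub) _; apply: leq_trans (dim_span _) _.
by rewrite size_map cardE.
Qed.
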